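(* Let $G=(V,E)$ be a finite connected multigraph, $\mathscr H_0$ a connected component of its exchange graph with vertex set $\mathscr V_0=\mathscr V_{0,1}\sqcup\mathscr V_{0,2}$ (where $\mathscr V_{0,i}=\mathscr V_0\cap\mathscr V_i$). For $u,v\in V$ the following properties are equivalent: (1) $u\not\simeq v$; (2) there exists $(F,T)\in\mathscr V_{0,1}$ such that $u$ and $v$ lie in different connected components of $F$; (3) there exists $(T',F')\in\mathscr V_{0,2}$ such that $u$ and $v$ lie in different connected components of $F'$.
   Context: A spanning tree of $G$ is a subgraph with vertex set $V$ that is a tree; a spanning 2-forest is a subgraph with vertex set $V$, without cycles, with exactly two connected components; $\mathcal{ST}(G)$, $\mathcal{SF}_2(G)$ denote the sets of these. For a spanning subgraph $G'$, $G'+e$ (resp. $G'-e$) is the spanning subgraph with edge set $E(G')\cup\{e\}$ (resp. $E(G')\setminus\{e\}$). The exchange graph $\mathscr H$ of $G$ has vertex set $\mathscr V_1\sqcup\mathscr V_2$, $\mathscr V_1=\{(F,T): F\in\mathcal{SF}_2(G),T\in\mathcal{ST}(G),E(F)\cap E(T)=\emptyset\}$, $\mathscr V_2=\{(T,F):T\in\mathcal{ST}(G),F\in\mathcal{SF}_2(G),E(F)\cap E(T)=\emptyset\}$, with $(F,T)\in\mathscr V_1$ adjacent to $(T',F')\in\mathscr V_2$ iff there is $e\in E(T)$ with $F'=T-e$ and $T'=F+e$. For a spanning 2-forest $F$, $\mathcal{P}(F)$ is the partition of $V$ into the vertex sets of its two components; for a partition $\mathcal{P}$ of $V$, $E(\mathcal{P})$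 is the set of edges of $G$ joining different parts; $T\setminus E(\mathcal{P}(F))$ is the spanning subgraph with edge set $E(T)\setminus E(\mathcal{P}(F))$. The relation $\simeq$ on $V$ is defined by: $u\simeq v$ iff for every $(F,T)\in\mathscr V_{0,1}$, $u$ and $v$ lie in the same connected component of $T\setminus E(\mathcal{P}(F))$. (The paper shows this equals the analogous relation defined using all $(T,F)\in\mathscr V_{0,2}$.) *)

(* Defs.v *)
From mathcomp Require Import all_boot.
Set Implicit Arguments. Unset Strict Implicit. Unset Printing Implicit Defensive.

(* A finite multigraph: vertex finType V, edge finType E (parallel edges and
   loops allowed), each edge e has endpoints (ends e).1 and (ends e).2.
   A spanning subgraph is represented by its edge set S : {set E}. *)
Section Multigraph.
Variables (V E : finType) (ends : E -> V * V).

Definition sadj (S : {set E}) : rel V :=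
  fun x y => [exists e in S, (ends e == (x, y)) || (ends e == (y, x))].

Definition sconn (S : {set E}) (x y : V) : bool := connect (sadj S) x y.

Definition ncomp (S : {set E}) : nat :=
  #|[set [set y | sconn S x y] | x : V]|.

(* S has no cycle: no edge of S lies on a cycle of S, i.e. for each e in S
   the endpoints of e are disconnected in S - e (this also excludes loops). *)
Definition acyclic (S : {set E}) : bool :=
  [forall e in S, ~~ sconn (S :\ e) (ends e).1 (ends e).2].

Definition is_spanning_tree (S : {set E}) : bool := acyclic S && (ncomp S == 1).
Definition is_spanning_2forest (S : {set E}) : bool := acyclic S && (ncomp S == 2).

Definition connected_graph : Prop := forall x y : V, sconn [set: E] x y.

(* Vertices of the exchange graph: inl (F,T) stands for (F,T) in V_1,
   inr (T,F) stands for (T,F) in V_2. *)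
Definition xnode := (({set E} * {set E}) + ({set E} * {set E}))%type.

Definition is_xvertex (a : xnode) : bool :=
  match a with
  | inl (F, T) => [&& is_spanning_2forest F, is_spanning_tree T & [disjoint F & T]]
  | inr (T, F) => [&& is_spanning_tree T, is_spanning_2forest F & [disjoint F & T]]
  end.

Definition xadj12 (FT TF : {set E} * {set E}) : bool :=
  [exists e in FT.2, (TF.2 == FT.2 :\ e) && (TF.1 == e |: FT.1)].

Definition xadj (a b : xnode) : bool :=
  is_xvertex a && is_xvertex b &&
  match a, b with
  | inl FT, inr TF => xadj12 FT TF
  | inr TF, inl FT => xadj12 FT TF
  | _, _ => false
  end.

Definition in_comp (x0 a : xnode) : bool := is_xvertex a && connect xadj x0 a.

Definition cut_edges (F : {set E}) : {set E} :=
  [set e | ~~ sconn F (ends e).1 (ends e).2].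

Definition simeq (x0 : xnode) (u v : V) : Prop :=
  forall F T : {set E}, in_comp x0 (inl (F, T)) ->
    sconn (T :\: cut_edges F) u v.

End Multigraph.

(* Main.v *)
Require Import Defs.
From mathcomp Require Import all_boot.
Set Implicit Arguments. Unset Strict Implicit. Unset Printing Implicit Defensive.

Lemma connect_pres (T : finType) (r : rel T) (P : T -> bool) x :
  P x -> (forall y z, P y -> r y z -> P z) -> forall y, connect r x y -> P y.
Proof.
move=> Px H y /connectP [p pth ->]; elim: p x Px pth => //= z p IH x Px /andP[rxz pth].
exact: IH (H _ _ Px rxz) pth.
Qed.

Section Proofs.
Variables (V E : finType) (ends : E -> V * V).
Notation sc := (sconn ends).
Implicit Types S A B D : {set E}.

Lemma sadj_sym S : symmetric (sadj ends S).
Proof.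
move=> x y; rewrite /sadj; apply/existsP/existsP => -[e He]; exists e;
  by rewrite orbC.
Qed.

Lemma sc_sym S x y : sc S x y = sc S y x.
Proof. by rewrite /sconn (sym_connect_sym (sadj_sym S)). Qed.

Lemma sc_symI S x y : sc S x y -> sc S y x.
Proof. by rewrite sc_sym. Qed.

Lemma sc_trans S x y z : sc S x y -> sc S y z -> sc S x z.
Proof. exact: connect_trans. Qed.

Lemma sc_refl S x : sc S x x.
Proof. exact: connect0. Qed.

Lemma sc_edge S e : e \in S -> sc S (ends e).1 (ends e).2.
Proof.
move=> eS; apply: connect1; apply/existsP; exists e; rewrite eS /=.
by case: (ends e) => a b; rewrite eqxx.
Qed.

Lemma sc_lift S S' x y :
  (forall e, e \in S -> sc S' (ends e).1 (ends e).2) -> sc S x y -> sc S' x y.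
Proof.
move=> H; apply: (connect_pres (P := sc S' x)) (sc_refl _ _) _ y.
move=> y' z Hy /existsP[e /andP[eS /orP[/eqP E'|/eqP E']]]; have:= H e eS;
  rewrite E' /= => He; first exact: sc_trans Hy He.
by rewrite sc_sym in He; exact: sc_trans Hy He.
Qed.

Lemma sc_mono S1 S2 x y : S1 \subset S2 -> sc S1 x y -> sc S2 x y.
Proof. move=> sub; apply: sc_lift => e eS; apply: sc_edge; exact: (subsetP sub). Qed.

Lemma sc_cut S g x y : sc S x y ->
  sc (S :\ g) x y || (sc (S :\ g) x (ends g).1 && sc (S :\ g) (ends g).2 y)
  || (sc (S :\ g) x (ends g).2 && sc (S :\ g) (ends g).1 y).
Proof.
set R := S :\ g => Hxy.
apply: (@connect_pres _ _ (fun y => sc R x y || (sc R x (ends g).1 && sc R (ends g).2 y)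
  || (sc R x (ends g).2 && sc R (ends g).1 y)) x _ _ y Hxy); first by rewrite sc_refl.
move=> y' z Py /existsP[e]; case/andP => eS He.
case: (eqVneq e g) => [Eeg | neg].
  subst e; case/orP: He => /eqP E'; rewrite E' /= !sc_refl !andbT in Py *.
    by move: Py; case: (sc R x y'); case: (sc R x z); rewrite /= ?orbT.
  by move: Py; case: (sc R x y'); case: (sc R x z); rewrite /= ?orbT.
have Hyz : sc R y' z.
  apply: connect1; apply/existsP; exists e; by rewrite !inE neg eS He.
case/orP: Py => [/orP[H|/andP[H1 H2]]|/andP[H1 H2]].
- by rewrite (sc_trans H Hyz).
- by rewrite H1 (sc_trans H2 Hyz) orbT.
- by rewrite H1 (sc_trans H2 Hyz) orbT.
Qed.

Lemma acyclic_sub S S' : acyclic ends S -> S' \subset S -> acyclic ends S'.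
Proof.
move=> H sub; apply/forall_inP => f fS'.
have:= forall_inP H f (subsetP sub f fS'); apply: contra; apply: sc_mono.
by apply/subsetP => x; rewrite !inE => /andP[-> /(subsetP sub) ->].
Qed.

Lemma sc_two S e f u v : acyclic ends S -> e \in S -> f \in S -> e != f ->
  sc (S :\ f) u v -> sc (S :\ e) u v -> sc (S :\ f :\ e) u v.
Proof.
move=> Ac eS fS nef Hf He; apply/negPn/negP => nR.
have Rsub : S :\ f :\ e \subset S :\ f by apply/subsetP => x; rewrite !inE => /andP[_ ->].
have Req : S :\ e :\ f = S :\ f :\ e.
  by apply/setP => x; rewrite !inE !andbA (andbC (x != f)).
have Acf := forall_inP Ac f fS.
have ce : sc (S :\ f) (ends e).1 (ends e).2 by apply: sc_edge; rewrite !inE nef eS.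
apply: (negP Acf).
move: (sc_cut f He); rewrite Req (negbTE nR) /= => H1.
move: (sc_cut e Hf); rewrite (negbTE nR) /= => H2.
have M := sc_mono Rsub.
case/orP: H1 => /andP[/M h1 /M h2]; case/orP: H2 => /andP[/M h3 /M h4].
- exact: sc_trans (sc_trans (sc_symI h1) h3) (sc_trans ce (sc_trans h4 (sc_symI h2))).
- exact: sc_trans (sc_trans (sc_symI h1) h3) (sc_trans (sc_symI ce) (sc_trans h4 (sc_symI h2))).
- exact: sc_trans (sc_trans h2 (sc_symI h4)) (sc_trans (sc_symI ce) (sc_trans (sc_symI h3) h1)).
- exact: sc_trans (sc_trans h2 (sc_symI h4)) (sc_trans ce (sc_trans (sc_symI h3) h1)).
Qed.

Lemma forest_sep n S D u v : #|D| <= n -> acyclic ends S -> D \subset S ->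
  sc S u v -> ~~ sc (S :\: D) u v -> exists2 e, e \in D & ~~ sc (S :\ e) u v.
Proof.
elim: n S D => [|n IH] S D.
  rewrite leqn0 cards_eq0 => /eqP -> _ _ H; by rewrite setD0 H.
move=> Dn Ac sub H nH.
case: (set_0Vmem D) => [D0 | [f fD]].
  by move: nH; rewrite D0 setD0 H.
case: (boolP (sc (S :\ f) u v)) => Hf; last by exists f.
have fS := subsetP sub f fD.
have [e /setD1P [nef eD] He'] : exists2 e, e \in D :\ f & ~~ sc (S :\ f :\ e) u v.
  apply: IH.
  - by move: Dn; rewrite (cardsD1 f D) fD.
  - by apply: acyclic_sub Ac _; apply: subsetDl.
  - by apply/subsetP => x; rewrite !inE => /andP[-> /(subsetP sub) ->].
  - exact: Hf.
  - have -> : S :\ f :\: (D :\ f) = S :\: D.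
      apply/setP => x; rewrite !inE; case: (eqVneq x f) => [->|] //=.
      by rewrite fD.
    exact: nH.
exists e => //; apply/negP => He; apply: (negP He').
apply: sc_two => //; exact: (subsetP sub).
Qed.

Definition cls S x := [set y | sc S x y].

Lemma cls_eq S x y : (cls S x == cls S y) = sc S x y.
Proof.
apply/eqP/idP => [H | H].
  have : y \in cls S y by rewrite inE sc_refl.
  by rewrite -H inE.
apply/setP => z; rewrite !inE; apply/idP/idP => Hz.
  by apply: sc_trans Hz; rewrite sc_sym.
exact: sc_trans H Hz.
Qed.

Lemma ncompE S : ncomp ends S = #|[set cls S x | x : V]|.
Proof. by []. Qed.

Lemma tree_sc S : ncomp ends S == 1 -> forall x y, sc S x y.
Proof.
rewrite ncompE => /cards1P [c Hc] x y; rewrite -cls_eq.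
have Hx : cls S x \in [set cls S x | x : V] by apply/imsetP; exists x.
have Hy : cls S y \in [set cls S x | x : V] by apply/imsetP; exists y.
by rewrite Hc !inE in Hx Hy; rewrite (eqP Hx) (eqP Hy).
Qed.

Lemma forest2_sc S a b : ncomp ends S == 2 -> ~~ sc S a b ->
  forall x, sc S a x || sc S b x.
Proof.
rewrite ncompE => /eqP Hc nab x.
have sub : [set cls S a; cls S b] \subset [set cls S x | x : V].
  by apply/subsetP => c /set2P [] ->; apply/imsetP; [exists a | exists b].
have : [set cls S a; cls S b] == [set cls S x | x : V].
  by rewrite eqEcard sub Hc cards2 cls_eq nab.
move/eqP => Heq.
have Hx : cls S x \in [set cls S x | x : V] by apply/imsetP; exists x.
by rewrite -Heq !inE !(eq_sym (cls S x)) !cls_eq in Hx.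
Qed.

Lemma ncomp1 S a : (forall x, sc S a x) -> ncomp ends S = 1.
Proof.
move=> H; rewrite ncompE.
have -> : [set cls S x | x : V] = [set cls S a].
  apply/setP => c; apply/imsetP/set1P => [[x _ ->] | ->]; last by exists a.
  by apply/eqP; rewrite cls_eq sc_sym.
by rewrite cards1.
Qed.

Lemma ncomp2 S a b : ~~ sc S a b -> (forall x, sc S a x || sc S b x) ->
  ncomp ends S = 2.
Proof.
move=> nab H; rewrite ncompE.
have -> : [set cls S x | x : V] = [set cls S a; cls S b].
  apply/setP => c; apply/imsetP/set2P => [[x _ ->] | [] ->]; last 2 first.
  - by exists a.
  - by exists b.
  by case/orP: (H x) => Hx; [left | right]; apply/eqP; rewrite cls_eq sc_sym.
by rewrite cards2 cls_eq nab.
Qed.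

Lemma sep_cut F T u v : ~~ sc F u v -> ~~ sc (T :\: cut_edges ends F) u v.
Proof.
apply: contra; apply: sc_lift => e; rewrite !inE => /andP [].
by rewrite negbK.
Qed.

Lemma exch A B u v : is_spanning_tree ends A -> is_spanning_2forest ends B ->
  [disjoint B & A] -> ~~ sc (A :\: cut_edges ends B) u v ->
  exists e, [/\ e \in A, e \notin B, is_spanning_2forest ends (A :\ e),
    is_spanning_tree ends (e |: B) &
    ~~ sc (A :\ e) u v /\ [disjoint (A :\ e) & (e |: B)]].
Proof.
move=> /andP [AcA /tree_sc HA] /andP [AcB HB] HD Hs.
have [e eD He] : exists2 e, e \in A :&: cut_edges ends B & ~~ sc (A :\ e) u v.
  apply: (@forest_sep #|A :&: cut_edges ends B|) => //.
  - exact: subsetIl.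
  - have -> : A :\: (A :&: cut_edges ends B) = A :\: cut_edges ends B.
      by apply/setP => x; rewrite !inE; case: (x \in A); rewrite ?andbT ?andbF.
    exact: Hs.
move: eD; rewrite !inE => /andP [eA nab].
set a := (ends e).1 in nab *; set b := (ends e).2 in nab *.
have eB : e \notin B by apply: contra nab => eB; exact: sc_edge.
exists e; split => //; last split => //.
- rewrite /is_spanning_2forest (acyclic_sub AcA (subD1set A e)) /=.
  apply/eqP; apply: (@ncomp2 _ a b).
    exact: (forall_inP AcA e eA).
  move=> x; move: (sc_cut e (HA a x)); rewrite -/a -/b sc_refl /=.
  by case/orP => [/orP [-> | ->] | /andP [_ ->]]; rewrite ?orbT.
- rewrite /is_spanning_tree; apply/andP; split; last first.
    apply/eqP; apply: (@ncomp1 _ a) => x.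
    have Hab : sc (e |: B) a b by apply: sc_edge; rewrite setU11.
    have sub : B \subset e |: B by apply: subsetUr.
    case/orP: (forest2_sc HB nab x) => /(sc_mono sub) Hx //.
    exact: sc_trans Hab Hx.
  apply/forall_inP => f; rewrite in_setU1 => /orP [/eqP -> | fB].
    have -> : (e |: B) :\ e = B.
      apply/setP => x; rewrite !inE; case: (eqVneq x e) => [-> | ] //=.
      by rewrite (negbTE eB).
    exact: nab.
  have nfe : f != e by apply: contraNneq eB => <-.
  have Eq : (e |: B) :\ f :\ e = B :\ f.
    apply/setP => x; rewrite !inE; case: (eqVneq x e) => [-> | ] //=.
    by rewrite (negbTE eB) andbF.
  have AcBf := forall_inP AcB f fB.
  apply/negP => H; move: (sc_cut e H); rewrite Eq (negbTE AcBf) /= -/a -/b.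
  have sub : B :\ f \subset B by apply: subD1set.
  have cf : sc B (ends f).1 (ends f).2 by apply: sc_edge.
  case/orP => /andP [/(sc_mono sub) h1 /(sc_mono sub) h2]; apply: (negP nab).
    exact: sc_trans (sc_symI h1) (sc_trans cf (sc_symI h2)).
  exact: sc_trans h2 (sc_trans (sc_symI cf) h1).
- move: HD; rewrite -!setI_eq0 => /eqP /setP HD.
  apply/eqP/setP => x; move: (HD x); rewrite !inE.
  by case: (eqVneq x e) => [-> | ] //=; case: (x \in A); rewrite ?andbT ?andbF.
Qed.

Lemma stepX x0 F T u v : in_comp ends x0 (inl (F, T)) ->
  ~~ sc (T :\: cut_edges ends F) u v ->
  exists T' F', in_comp ends x0 (inr (T', F')) /\ ~~ sc F' u v.
Proof.
move=> Hc Hs; case/andP: (Hc) => Hx Hcon; case/and3P: (Hx) => HF HT HD.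
have [e [eA enB HA' HB' [Hs' HD']]] := exch HT HF HD Hs.
exists (e |: F), (T :\ e); split => //.
have Hx' : is_xvertex ends (inr (e |: F, T :\ e)) by rewrite /= HB' HA' HD'.
rewrite /in_comp Hx' /=; apply: connect_trans Hcon (connect1 _).
rewrite /xadj Hx Hx' /=; apply/existsP; exists e; by rewrite eA !eqxx.
Qed.

Lemma stepY x0 T F u v : in_comp ends x0 (inr (T, F)) -> ~~ sc F u v ->
  exists F' T', in_comp ends x0 (inl (F', T')) /\ ~~ sc F' u v.
Proof.
move=> Hc Hs; case/andP: (Hc) => Hx Hcon; case/and3P: (Hx) => HT HF HD.
have [e [eA enB HA' HB' [Hs' HD']]] := exch HT HF HD (sep_cut T Hs).
exists (T :\ e), (e |: F); split => //.
have Hx' : is_xvertex ends (inl (T :\ e, e |: F)) by rewrite /= HB' HA' HD'.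
rewrite /in_comp Hx' /=; apply: connect_trans Hcon (connect1 _).
rewrite /xadj Hx Hx' /=; apply/existsP; exists e; rewrite setU11 /=.
apply/andP; split; apply/eqP/setP => x; rewrite !inE;
  case: (eqVneq x e) => [-> | ] //=; by rewrite ?eA ?(negbTE enB).
Qed.

End Proofs.

Theorem proposition2p10 (V E : finType) (ends : E -> V * V)
  (Gconn : connected_graph ends)
  (x0 : xnode E) (Hx0 : is_xvertex ends x0) (u v : V) :
  (~ simeq ends x0 u v <->
     exists F T : {set E}, in_comp ends x0 (inl (F, T)) /\ ~~ sconn ends F u v) /\
  ((exists F T : {set E}, in_comp ends x0 (inl (F, T)) /\ ~~ sconn ends F u v) <->
     exists T' F' : {set E}, in_comp ends x0 (inr (T', F')) /\ ~~ sconn ends F' u v).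
Proof.
split; split.
- move=> Hn.
  case: (pickP (fun FT : {set E} * {set E} => in_comp ends x0 (inl FT) &&
     ~~ sconn ends (FT.2 :\: cut_edges ends FT.1) u v)) => [[F T] /andP [Hc Hs] | H0].
    have [T' [F' [Hc' Hs']]] := stepX Hc Hs.
    exact: stepY Hc' Hs'.
  exfalso; apply: Hn => F T Hc; have := H0 (F, T); rewrite /= Hc /=.
  exact: negbFE.
- move=> [F [T [Hc Hs]]] Hsim.
  by have := sep_cut T Hs; rewrite Hsim.
- move=> [F [T [Hc Hs]]]; exact: stepX Hc (sep_cut T Hs).
- move=> [T [F [Hc Hs]]]; exact: stepY Hc Hs.
Qed.
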